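(* Let $w=i_n\cdots i_1$ be a reverse lattice word and $\sigma=\mathrm{std}(w)$. Then $T_w=P(\sigma^{-1})$.
   Context: A word $w=i_n\cdots i_1$ of positive integers is reverse lattice if in every suffix $i_k\cdots i_1$ the number of $j$'s is at least the number of $(j+1)$'s for every $j\geq1$. $\mathrm{std}(w)$: replace the letters of $w$ (read left to right) by $1,\ldots,n$, smaller letters first, equal letters increasing from left to right; a permutation in one-line notation. Partitions in French convention (rows numbered bottom to top). With $\lambda_0=\varnothing$ and $\lambda_k$ obtained from $\lambda_{k-1}$ by adding a box at the addable node in column $i_k$, $T_w$ is the tableau of shape $\lambda_n$ whose box in $\lambda_k\setminus\lambda_{k-1}$ contains $n-k+1$. $P(\pi)$ is the insertion tableau of the variant Robinson–Schensted algorithm: insert $\pi(1),\ldots,\pi(n)$ successively starting at the bottom row; if $y$ exceeds some entry of the current row, $y$ replaces the greatest entry $x<y$ of that row and $x$ is inserted into the next row up; otherwise $y$ is appended at the end of the row. *)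

(* Defs.v *)
From mathcomp Require Import all_boot.
Set Implicit Arguments. Unset Strict Implicit. Unset Printing Implicit Defensive.

(* A word w = i_n ... i_1 is the list [:: i_n; ...; i_1] (read left to right). *)
Definition positive_word (w : seq nat) : bool := all (fun i => 0 < i) w.

(* Every suffix i_k ... i_1 (= drop (n - k) w) has at least as many j's as (j+1)'s. *)
Definition reverse_lattice (w : seq nat) : Prop :=
  forall k j, k <= size w -> 1 <= j ->
    count_mem j.+1 (drop (size w - k) w) <= count_mem j (drop (size w - k) w).

Definition std (w : seq nat) : seq nat :=
  [seq (count (fun x => x < nth 0 w p) w + count_mem (nth 0 w p) (take p w)).+1
  | p <- iota 0 (size w)].

Definition perm_inv (s : seq nat) : seq nat :=
  [seq (index v s).+1 | v <- iota 1 (size s)].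

(* Tableaux in French convention: list of rows, bottom row first; each row is
   listed left to right; column c (1-based) is position c-1 of the rows. *)
Definition tableau := seq (seq nat).

(* Add a box containing v at the top of column c (the addable node in column c):
   the height of column c is the number of rows with at least c cells. *)
Definition add_in_col (c v : nat) (t : tableau) : tableau :=
  let h := count (fun r : seq nat => c <= size r) t in
  set_nth [::] t h (rcons (nth [::] t h) v).

(* T_w: for k = 1..n, add in column i_k the entry n-k+1. *)
Definition T_of (w : seq nat) : tableau :=
  foldl (fun t ce => add_in_col ce.1 ce.2 t) [::]
        (zip (rev w) (rev (iota 1 (size w)))).

(* Row insertion of the variant RS: if y exceeds some entry of the row, y replaces
   the greatest entry x < y and x is bumped; otherwise y is appended at the end. *)
Definition row_insert (y : nat) (r : seq nat) : option nat * seq nat :=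
  let smaller := [seq x <- r | x < y] in
  if smaller is x0 :: _ then
    let x := foldl maxn x0 smaller in
    (Some x, set_nth 0 r (index x r) y)
  else (None, rcons r y).

Fixpoint tab_insert (y : nat) (t : tableau) : tableau :=
  match t with
  | [::] => [:: [:: y]]
  | r :: t' =>
      match row_insert y r with
      | (Some x, r') => r' :: tab_insert x t'
      | (None, r') => r' :: t'
      end
  end.

Definition P_of (pi : seq nat) : tableau := foldl (fun t y => tab_insert y t) [::] pi.

(* Main.v *)
Require Import Defs.
From mathcomp Require Import all_boot zify.
Set Implicit Arguments. Unset Strict Implicit. Unset Printing Implicit Defensive.

Definition nonem (c : seq nat) : bool := c != [::].
Definition row_of (cols : seq (seq nat)) : seq nat := [seq head 0 c | c <- cols & nonem c].
Fixpoint ocr k (cols : seq (seq nat)) : tableau :=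
  if k is k'.+1 then
    if has nonem cols then row_of cols :: ocr k' (map behead cols) else [::]
  else [::].
Definition of_cols cols := ocr (sumn (map size cols)) cols.

Lemma sumn_behead cols :
  sumn (map size (map behead cols)) + count nonem cols = sumn (map size cols).
Proof.
elim: cols => [|c cs IH] //=; rewrite -IH.
by case: c => [|x c] /=; rewrite /nonem /=; lia.
Qed.

Lemma ocr_eq k k' cols : sumn (map size cols) <= k -> sumn (map size cols) <= k' ->
  ocr k cols = ocr k' cols.
Proof.
have H0 : forall cs, sumn (map size cs) = 0 -> has nonem cs = false.
  move=> cs; elim: cs => [|c cs IH] //=; case: c => //= _ _; exact: IH.
elim: k k' cols => [|k IH] [|k'] cols //=.
- rewrite leqn0 => /eqP /H0 -> //.
- by move=> _; rewrite leqn0 => /eqP /H0 ->.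
- move=> h1 h2; case Hh: (has nonem cols) => //; congr (_ :: _).
  have := sumn_behead cols; have := has_count nonem cols; rewrite Hh => c.
  by move=> e; apply: IH; lia.
Qed.

Lemma of_colsE cols : of_cols cols =
  if has nonem cols then row_of cols :: of_cols (map behead cols) else [::].
Proof.
rewrite /of_cols; case Hh: (has nonem cols).
- have := sumn_behead cols; have := has_count nonem cols; rewrite Hh => c e.
  case E: (sumn (map size cols)) => [|k]; first lia.
  rewrite /= Hh; congr (_ :: _); apply: ocr_eq; lia.
- by case: (sumn _) => //= n; rewrite Hh.
Qed.

Lemma of_cols_nil cols : all (fun c => c == [::]) cols -> of_cols cols = [::].
Proof.
move=> H; rewrite of_colsE; case: ifP => // /hasP [c cin]; rewrite /nonem.
by move: H => /allP /(_ c cin) ->.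
Qed.

Lemma row_of_cat a b : row_of (a ++ b) = row_of a ++ row_of b.
Proof. by rewrite /row_of filter_cat map_cat. Qed.

Lemma sumn0_all (C : seq (seq nat)) : sumn (map size C) = 0 -> all (fun c => c == [::]) C.
Proof. elim: C => [|c C IH] //=; case: c => //= _; exact: IH. Qed.

Lemma of_cols_rcons_nil C : of_cols (rcons C [::]) = of_cols C.
Proof.
elim: (size (flatten C)) {-2}C (leqnn (size (flatten C))) => [|k IH] {}C HC.
  move: HC; rewrite size_flatten leqn0 => /eqP /sumn0_all HC.
  by rewrite !of_cols_nil // all_rcons HC.
rewrite (of_colsE (rcons C [::])) (of_colsE C) has_rcons /=. rewrite -cats1 row_of_cat /= cats0.
case: ifP => // hC; rewrite map_cat /= cats1 IH //.
move: HC; rewrite !size_flatten; have := sumn_behead C; have := has_count nonem C.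
rewrite /shape; move: hC => -> ? ?; lia.
Qed.

Lemma filter_lt_nil (r : seq nat) y : (forall x, x \in r -> y < x) -> [seq x <- r | x < y] = [::].
Proof.
elim: r => //= x r IH H; rewrite ltnNge (ltnW (H x (mem_head _ _))) /=.
by apply: IH => z zin; apply: H; rewrite inE zin orbT.
Qed.

Lemma row_insert_app (r : seq nat) y : (forall x, x \in r -> y < x) -> row_insert y r = (None, rcons r y).
Proof. by move=> H; rewrite /row_insert filter_lt_nil. Qed.

Lemma row_insert_bump (r : seq nat) y d : (forall x, x \in r -> y < x) -> d < y ->
  row_insert y (rcons r d) = (Some d, rcons r y).
Proof.
move=> H dy; rewrite /row_insert -cats1 filter_cat filter_lt_nil //= dy /=.
have dr : d \notin r by apply/negP => /H; lia.
rewrite maxnn index_cat (negbTE dr) /= eqxx addn0 set_nthE size_cat /= addn1 ltnSn.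
by rewrite take_size_cat // drop_oversize ?size_cat //= ?addn1 // cats1.
Qed.

Lemma of_cols_rcons_cons C (x : nat) s : all nonem C ->
  of_cols (rcons C (x :: s)) = rcons (map (head 0) C) x :: of_cols (rcons (map behead C) s).
Proof.
move=> HC; rewrite of_colsE has_rcons /= /row_of filter_rcons /= (all_filterP HC).
by rewrite !map_rcons.
Qed.

Lemma nth0_head (c : seq nat) : nth 0 c 0 = head 0 c.
Proof. by case: c. Qed.

Lemma ins_col C D y :
  (forall col, col \in C -> size D < size col) ->
  sorted (fun a b => b < a) (y :: D) ->
  (forall col r, col \in C -> r <= size D -> nth 0 (y :: D) r < nth 0 col r) ->
  tab_insert y (of_cols (rcons C D)) = of_cols (rcons C (y :: D)).
Proof.
have allC : forall (C : seq (seq nat)) (D : seq nat), (forall col, col \in C -> size D < size col) -> all nonem C.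
  move=> C0 D0 H; apply/allP => c /H; rewrite /nonem; case: c => //.
have heads : forall (C : seq (seq nat)) (y : nat) (D : seq nat), (forall col r, col \in C -> r <= size D -> nth 0 (y :: D) r < nth 0 col r) ->
   forall x, x \in map (head 0) C -> y < x.
  move=> C0 y0 D0 H x /mapP [c cin ->]; rewrite -nth0_head; exact: (H c 0 cin).
elim: D y C => [|d D IH] y C H1 H2 H3.
  rewrite of_cols_rcons_nil.
  case: C H1 H3 => [|c C] H1 H3; first by rewrite /of_cols.
  have aC := allC _ _ H1.
  rewrite [of_cols (c :: C)]of_colsE /= /nonem.
  have -> : (c != [::]) by move: aC => /= /andP [].
  rewrite /= row_insert_app.
    by rewrite -rcons_cons of_cols_rcons_cons // of_cols_rcons_nil /row_of (all_filterP aC).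
  move=> x; move: (heads _ _ _ H3 x); rewrite /row_of (all_filterP aC); exact.
have aC := allC _ _ H1.
rewrite of_cols_rcons_cons //= row_insert_bump; last first.
- by move: H2 => /= /andP [].
- by move=> x; apply: (heads _ _ _ H3).
rewrite IH; first by rewrite of_cols_rcons_cons.
- move=> col /mapP [c cin ->]; rewrite size_behead; have := H1 c cin => /=; lia.
- by move: H2 => /= /andP [].
- move=> col r /mapP [c cin ->] rle; rewrite -[nth 0 (d :: D) r]/(nth 0 (y :: d :: D) r.+1).
  case: c cin => [|z c] cin /=; first by have := H1 _ cin.
  by rewrite -[nth 0 c r]/(nth 0 (z :: c) r.+1); apply: H3.
Qed.

Lemma block C E : sorted (fun a b => b < a) E ->
  (forall col, col \in C -> size E <= size col) ->
  (forall col i r, col \in C -> i < size E -> r <= i -> nth 0 E i < nth 0 col r) ->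
  foldl (fun t y => tab_insert y t) (of_cols C) (rev E) = of_cols (rcons C E).
Proof.
elim: E => [|e E IH] H1 H2 H3; first by rewrite of_cols_rcons_nil.
rewrite rev_cons foldl_rcons IH.
- apply: ins_col => //.
  by move=> col r cin rle; apply: H3 => //.
- exact: (path_sorted H1).
- by move=> col cin; have := H2 col cin => /=; lia.
- by move=> col i r cin ilt rle; apply: (H3 col i.+1 r) => //; lia.
Qed.

Lemma sorted_geq_split (l1 l2 : seq nat) x : sorted geq (l1 ++ x :: l2) ->
  all (fun y => x <= y) l1 /\ all (fun y => y <= x) l2.
Proof.
rewrite sorted_cat_cons => /andP [h1 h2]; split.
  move: h1; rewrite -rev_sorted rev_rcons /= => /(order_path_min _).
  rewrite all_rev; apply => a b c /= ; lia.
by move: h2 => /(order_path_min _); apply => a b c /=; lia.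
Qed.

Lemma rows_size cols r : r \in of_cols cols -> size r <= count nonem cols.
Proof.
elim: (size (flatten cols)) {-2}cols (leqnn (size (flatten cols))) r => [|k IH] {}cols HC r.
  move: HC; rewrite size_flatten leqn0 => /eqP /sumn0_all HC.
  by rewrite of_cols_nil.
rewrite of_colsE; case: ifP => // hC; rewrite inE => /orP [/eqP ->|].
  by rewrite /row_of size_map size_filter.
move/IH => H; apply: leq_trans (H _) _.
  move: HC; rewrite !size_flatten /shape; have := sumn_behead cols; have := has_count nonem cols.
  by move: hC => -> ? ?; lia.
elim: cols {HC hC H} => //= c cs IHc; rewrite /nonem /= in IHc *.
by case: c => [|x c] /=; [|case: (c != [::])] => /=; lia.
Qed.

Lemma row_of_nil Z : all (fun c => c == [::]) Z -> row_of Z = [::].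
Proof. by elim: Z => //= c Z IH /andP [/eqP -> /IH]. Qed.

Lemma add_in_col_cons a v r0 rest : a <= size r0 ->
  add_in_col a v (r0 :: rest) = r0 :: add_in_col a v rest.
Proof. by move=> H; rewrite /add_in_col /= H. Qed.

Lemma add_in_col_first a v r0 rest : (forall r, r \in r0 :: rest -> size r < a) ->
  add_in_col a v (r0 :: rest) = rcons r0 v :: rest.
Proof.
move=> H; rewrite /add_in_col.
have -> : count (fun r => a <= size r) (r0 :: rest) = 0.
  apply/eqP; rewrite -leqn0 leqNgt -has_count; apply/hasP => [[r /H]]; lia.
by [].
Qed.

Lemma sorted_behead (cols : seq (seq nat)) : sorted geq (map size cols) ->
  sorted geq (map size (map behead cols)).
Proof.
have -> : map size (map behead cols) = map predn (map size cols).
  by rewrite -!map_comp; apply: eq_map => c /=; rewrite size_behead.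
by apply: homo_sorted => x y /=; lia.
Qed.

Lemma add_col k cols i v : size (nth [::] cols i) = k ->
  i < size cols ->
  sorted geq (map size cols) ->
  sorted geq (map size (set_nth [::] cols i (rcons (nth [::] cols i) v))) ->
  add_in_col i.+1 v (of_cols cols) = of_cols (set_nth [::] cols i (rcons (nth [::] cols i) v)).
Proof.
elim: k cols => [|k IH] cols Hk Hi S1 S2.
- have Ec : cols = take i cols ++ [::] :: drop i.+1 cols.
    by rewrite -{1}(cat_take_drop i cols) (drop_nth [::] Hi); move: Hk => /size0nil ->.
  have sA : size (take i cols) = i by rewrite size_take Hi.
  move: Hk => /size0nil E0.
  rewrite set_nthE Hi E0 in S2; rewrite set_nthE Hi E0.
  move: (take i cols) (drop i.+1 cols) Ec sA S1 S2 => A Z -> sA.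
  rewrite !map_cat /= => S1 S2.
  have [_ HZ] := sorted_geq_split S1; have [HA _] := sorted_geq_split S2.
  have HZ' : all (fun c => c == [::]) Z.
    by apply/allP => c cZ; move/allP: HZ => /(_ (size c)) /(_ (map_f _ cZ)); rewrite leqn0 size_eq0.
  have HA' : all nonem A.
    by apply/allP => c cA; move/allP: HA => /(_ (size c)) /(_ (map_f _ cA)); rewrite /nonem -size_eq0; case: (size c).
  clear HA HZ S1 S2.
  case: A HA' sA => [|c0 A] HA' sA.
  + rewrite /= in sA *; rewrite -sA of_cols_nil /=; last by rewrite HZ'.
    rewrite /add_in_col /= of_colsE /=.
    rewrite of_cols_nil /=; last by apply/allP => c /mapP [d /(allP HZ') /eqP -> ->].
    by rewrite /row_of /= -/(row_of Z) row_of_nil.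
  + move: HA' => /= /andP [n0 HA'].
    have Hsz : forall r, r \in of_cols (c0 :: A ++ [::] :: Z) -> size r < i.+1.
      move=> r /rows_size; rewrite /= n0 count_cat /= (eq_in_count (a2 := predT)) ?count_predT; last by move=> c /(allP HA').
      rewrite (eq_in_count (a2 := pred0) (s := Z)) ?count_pred0; last by move=> c /(allP HZ') /eqP ->.
      by rewrite /= in sA; rewrite -sA add0n addn0 add1n ltnS.
    rewrite of_colsE /= n0 /= in Hsz *; rewrite add_in_col_first //.
    have Z0 : row_of Z = [::] by rewrite row_of_nil.
    have -> : row_of (c0 :: A ++ [::] :: Z) = row_of (c0 :: A).
      by rewrite -cat_cons row_of_cat -[row_of ([::] :: Z)]/(row_of Z) Z0 cats0.
    rewrite [of_cols (c0 :: _)]of_colsE /= n0 /=; congr (_ :: _).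
      rewrite -cat_cons row_of_cat -[[:: v] :: Z]/([:: [:: v]] ++ Z) row_of_cat Z0 cats0 cats1.
      by rewrite /row_of.
    by rewrite !map_cat.
- have Ec : cols = take i cols ++ nth [::] cols i :: drop i.+1 cols.
    by rewrite -{1}(cat_take_drop i cols) (drop_nth [::] Hi).
  case E: (nth [::] cols i) Hk Ec S1 S2 => [//|x s] Hk Ec S1 S2.
  have S2' := S2; have S1c := S1; move: S1c S2'; rewrite set_nthE Hi {1}Ec !map_cat /=.
  move=> S1' S2''; have [HA _] := sorted_geq_split S1'; have [HA2 _] := sorted_geq_split S2''.
  have HA' : all nonem (take i cols).
    by apply/allP => c cA; move/allP: HA => /(_ (size c)) /(_ (map_f _ cA)); rewrite /nonem -size_eq0 /=; case: (size c).
  have hc : has nonem cols by rewrite Ec has_cat /= orbT.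
  rewrite (of_colsE cols) hc add_in_col_cons; last first.
    rewrite /row_of size_map size_filter Ec count_cat /= (eq_in_count (a2 := predT)) ?count_predT; last by move=> c /(allP HA').
    by rewrite size_take Hi; lia.
  have Hmb : set_nth [::] (map behead cols) i (rcons (nth [::] (map behead cols) i) v)
           = map behead (take i cols ++ (x :: rcons s v) :: drop i.+1 cols).
    by rewrite !set_nthE size_map Hi (nth_map [::]) // E /= map_cat /= map_take map_drop.
  rewrite IH.
  + rewrite Hmb [RHS]of_colsE has_cat /= orbT; congr (_ :: _).
    rewrite {1}Ec -(cat1s (x :: s)) -(cat1s (x :: rcons s v)) !row_of_cat.
    by rewrite /row_of /=.
  + by rewrite (nth_map [::]) // E /=; case: Hk.
  + by rewrite size_map.
  + exact: sorted_behead.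
  + by rewrite Hmb; apply: sorted_behead; move: S2; rewrite set_nthE Hi.
Qed.

Definition colI (w : seq nat) p k b := [seq q.+1 | q <- rev (iota p k) & nth 0 w q == b].
Definition colT (w : seq nat) b := colI w 0 (size w) b.

Lemma w_map (w : seq nat) : map (nth 0 w) (iota 0 (size w)) = w.
Proof. by have := mkseq_nth 0 w; rewrite /mkseq. Qed.

Lemma drop_map_iota (w : seq nat) v : map (nth 0 w) (drop v (iota 0 (size w))) = drop v w.
Proof. by rewrite map_drop w_map. Qed.

Lemma size_colI w p k b : p + k = size w -> size (colI w p k b) = count_mem b (drop p w).
Proof.
move=> H; rewrite /colI size_map size_filter count_rev -(drop_map_iota w p) count_map.
rewrite drop_iota add0n -H addKn; apply: eq_count => q //.
Qed.

Lemma cnt_mono w : reverse_lattice w -> forall v a b, 0 < a -> a <= b ->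
  count_mem b (drop v w) <= count_mem a (drop v w).
Proof.
move=> RL v a b a0 ab.
have H1 : forall j, 0 < j -> count_mem j.+1 (drop v w) <= count_mem j (drop v w).
  move=> j j0; case: (leqP v (size w)) => hv.
    have := RL (size w - v) j (leq_subr _ _) j0; rewrite subKn //.
  by rewrite drop_oversize ?(ltnW hv).
rewrite -(subnKC ab); elim: (b - a) => [|d IH]; first by rewrite addn0.
rewrite addnS; apply: leq_trans (H1 _ _) IH; lia.
Qed.

Lemma sorted_iota_f (f : nat -> nat) m M : (forall c, m <= c -> f c.+1 <= f c) ->
  sorted geq (map f (iota m M)).
Proof.
elim: M m => [|M IH] m H //=.
case: M IH => [|M] IH //=; rewrite H //=.
have := IH m.+1; rewrite /= => -> // c hc; apply: H; lia.
Qed.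

Lemma sorted_cols w p k M : reverse_lattice w -> p + k = size w ->
  sorted geq (map size (map (colI w p k) (iota 1 M))).
Proof.
move=> RL H; rewrite -map_comp; apply: sorted_iota_f => c hc /=.
rewrite !size_colI //; apply: cnt_mono => //; lia.
Qed.

Lemma colI_S w p k b : colI w p k.+1 b = colI w p.+1 k b ++ (if nth 0 w p == b then [:: p.+1] else [::]).
Proof.
rewrite /colI /= rev_cons filter_rcons; case: ifP => _; last by rewrite cats0.
by rewrite map_rcons cats1.
Qed.

Definition Tf (t : tableau) (ce : nat * nat) := add_in_col ce.1 ce.2 t.

Lemma T_step w M : positive_word w -> reverse_lattice w -> (forall x, x \in w -> x <= M) ->
  forall k p, p + k = size w ->
  foldl Tf [::] [seq (nth 0 w q, q.+1) | q <- rev (iota p k)] = of_cols (map (colI w p k) (iota 1 M)).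
Proof.
move=> PW RL HM; elim=> [|k IH] p Hpk.
  rewrite /= of_cols_nil //; apply/allP => c /mapP [b _ ->] //.
have hp : p < size w by lia.
rewrite /= rev_cons map_rcons foldl_rcons IH; last by lia.
have wp : nth 0 w p \in w by rewrite mem_nth.
have wp0 : 0 < nth 0 w p by move/allP: PW => /(_ _ wp).
have wpM := HM _ wp.
set i := (nth 0 w p).-1.
have Ei : nth 0 w p = i.+1 by rewrite /i; lia.
rewrite Ei. have hiM : i < M by lia.
have Hi : i < size (map (colI w p.+1 k) (iota 1 M)) by rewrite size_map size_iota /i; lia.
have Eset : set_nth [::] (map (colI w p.+1 k) (iota 1 M)) i
     (rcons (nth [::] (map (colI w p.+1 k) (iota 1 M)) i) p.+1) = map (colI w p k.+1) (iota 1 M).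
  apply: (@eq_from_nth _ [::]).
    by rewrite size_set_nth !size_map !size_iota; move: Hi; rewrite size_map size_iota; lia.
  move=> j; rewrite size_set_nth size_map size_iota => hj.
  have hjM : j < M by move: Hi; rewrite size_map size_iota; lia.
  rewrite nth_set_nth /= [in RHS](nth_map 0) ?size_iota // nth_iota // colI_S Ei.
  case: eqP => [->|hne].
    by rewrite (nth_map 0) ?size_iota // nth_iota // add1n eqxx cats1.
  rewrite (nth_map 0) ?size_iota // nth_iota //; case: eqP; rewrite ?cats0 //; lia.
rewrite /Tf /= (@add_col _ _ _ _ (erefl _)) // ?Eset //.
- apply: sorted_cols => //; lia.
- exact: sorted_cols.
Qed.

Lemma zip_rev_eq (w : seq nat) : zip (rev w) (rev (iota 1 (size w))) =
  [seq (nth 0 w q, q.+1) | q <- rev (iota 0 (size w))].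
Proof.
rewrite -rev_zip ?size_iota // map_rev; congr rev.
apply: (@eq_from_nth _ (0,0)); first by rewrite size_zip size_map !size_iota minnn.
move=> j; rewrite size_zip size_iota minnn => hj.
by rewrite nth_zip ?size_iota // (nth_map 0) ?size_iota // !nth_iota.
Qed.

Lemma T_final w M : positive_word w -> reverse_lattice w -> (forall x, x \in w -> x <= M) ->
  T_of w = of_cols (map (colT w) (iota 1 M)).
Proof.
move=> PW RL HM; rewrite /T_of zip_rev_eq.
exact: (T_step PW RL HM (p := 0) (k := size w)).
Qed.

Lemma sorted_colT w b : sorted (fun a b => b < a) (colT w b).
Proof.
rewrite /colT /colI; apply: (homo_sorted (e := fun a b => b < a)) => [x y /= //|].
apply: sorted_filter; first by move=> x y z /=; lia.
by rewrite rev_sorted; apply: iota_ltn_sorted.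
Qed.

Lemma count_gt_nth (s : seq nat) i : sorted (fun a b => b < a) s -> i < size s ->
  count (fun z => nth 0 s i < z) s = i.
Proof.
elim: s i => [|x s IH] i //= Hs hi.
have Hall : all (fun z => z < x) s.
  by move: Hs => /(order_path_min _); apply => a b c /=; lia.
have Hs' : sorted (fun a b => b < a) s := path_sorted Hs.
case: i hi => [|i] hi /=.
  rewrite ltnn add0n; apply/eqP; rewrite -leqn0 leqNgt -has_count; apply/hasP => [[z /(allP Hall)]]; lia.
have hlt : nth 0 s i < x by apply: (allP Hall); rewrite mem_nth.
by rewrite hlt IH.
Qed.

Lemma nth_gt_of_count (s : seq nat) x r : sorted (fun a b => b < a) s ->
  r < count (fun z => x < z) s -> x < nth 0 s r.
Proof.
elim: s r => [|y s IH] r //= Hs.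
have Hall : all (fun z => z < y) s.
  by move: Hs => /(order_path_min _); apply => a b c /=; lia.
have Hs' : sorted (fun a b => b < a) s := path_sorted Hs.
case: r => [|r] /=.
  case hxy: (x < y) => //= hc.
  have : has (fun z => x < z) s by rewrite has_count.
  by move=> /hasP [z /(allP Hall)]; lia.
move=> hc; apply: IH => //; move: hc; case: (x < y) => /=; lia.
Qed.

Lemma cntT w b v : count (fun z => v < z) (colT w b) = count_mem b (drop v w).
Proof.
rewrite /colT /colI count_map count_filter count_rev.
rewrite -{1}(cat_take_drop v (iota 0 (size w))) count_cat.
have -> : count (predI (preim succn (fun z => v < z)) (fun q => nth 0 w q == b)) (take v (iota 0 (size w))) = 0.
  apply/eqP; rewrite -leqn0 leqNgt -has_count; apply/hasP => [[q]].
  rewrite take_iota mem_iota /=; lia.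
rewrite add0n -[in RHS](drop_map_iota w v) count_map; apply: eq_in_count => q.
rewrite drop_iota mem_iota /= => hq; rewrite ltnS.
by have -> : v <= q by lia.
Qed.

Lemma memT w b x : x \in colT w b -> exists q, [/\ x = q.+1, q < size w & nth 0 w q = b].
Proof.
rewrite /colT /colI => /mapP [q]; rewrite mem_filter mem_rev mem_iota => /andP [/eqP hb hq] ->.
by exists q; split => //; lia.
Qed.

Lemma P_step w : reverse_lattice w -> forall K,
  foldl (fun t y => tab_insert y t) [::] (flatten (map (fun b => rev (colT w b)) (iota 1 K)))
  = of_cols (map (colT w) (iota 1 K)).
Proof.
move=> RL; elim=> [|K IH] //.
rewrite -[K.+1]addn1 !iotaD !map_cat flatten_cat foldl_cat IH /= cats0 cats1.
apply: block.
- exact: sorted_colT.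
- move=> col /mapP [a]; rewrite mem_iota => ha ->.
  rewrite /colT !size_colI //; apply: cnt_mono => //; lia.
- move=> col i r /mapP [a]; rewrite mem_iota => ha -> hi hr.
  apply: nth_gt_of_count; first exact: sorted_colT.
  rewrite cntT.
  have [q [Eq hq wq]] := memT (mem_nth 0 hi).
  rewrite Eq.
  have e1 : count_mem a (drop q w) = count_mem a (drop q.+1 w).
    by rewrite (drop_nth 0 hq) /= wq; have -> : (1 + K == a) = false by apply/eqP; lia.
  have e2 : count_mem (1 + K) (drop q w) = (count_mem (1 + K) (drop q.+1 w)).+1.
    by rewrite (drop_nth 0 hq) /= wq eqxx.
  have c1 := cnt_mono RL q (a := a) (b := 1 + K).
  have := count_gt_nth (sorted_colT w (1 + K)) hi; rewrite Eq cntT => c2.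
  rewrite -e1; apply: leq_trans (c1 _ _); [|lia|lia].
  rewrite e2 c2; lia.
Qed.

Lemma count_split (T : Type) (a b c : pred T) s :
  (forall x, a x + b x = c x :> nat) -> count a s + count b s = count c s.
Proof. by move=> H; elim: s => //= x s <-; rewrite -H; lia. Qed.

Lemma sum_count (T : Type) (s : seq T) (Q : pred T) (f : T -> nat) m k :
  sumn [seq count (fun x => Q x && (f x == b)) s | b <- iota m k]
  = count (fun x => Q x && (m <= f x < m + k)) s.
Proof.
elim: k m => [|k IH] m /=.
  by elim: s => //= x s <-; case: (Q x) => //=; have -> : (m <= f x < m + 0) = false by lia.
rewrite IH; apply: count_split => x; case: (Q x) => //=.
case: (f x =P m) => [->|hne] /=; first by rewrite ltnn /=; lia.
case: (leqP m.+1 (f x)) => h1 /=.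
  by rewrite (_ : m <= f x = true) /= ?add0n ?addSnnS //; lia.
by rewrite (_ : m <= f x = false) //; lia.
Qed.

Definition Bw (w : seq nat) b := [seq q.+1 | q <- iota 0 (size w) & nth 0 w q == b].

Lemma rev_colT w b : rev (colT w b) = Bw w b.
Proof. by rewrite /colT /colI -map_rev filter_rev revK. Qed.

Lemma count_flat w P K : count P (flatten (map (Bw w) (iota 1 K)))
  = count (fun q => P q.+1 && (1 <= nth 0 w q < 1 + K)) (iota 0 (size w)).
Proof.
rewrite count_flatten -map_comp -(sum_count (iota 0 (size w)) (fun q => P q.+1) (nth 0 w)).
congr sumn; apply: eq_map => b /=.
by rewrite /Bw count_map count_filter.
Qed.

Lemma mem_Bw w b x : x \in Bw w b -> exists q, [/\ x = q.+1, q < size w & nth 0 w q = b].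
Proof.
rewrite /Bw => /mapP [q]; rewrite mem_filter mem_iota => /andP [/eqP hb hq] ->.
by exists q; split => //; lia.
Qed.

Section Main.
Definition Lw (w : seq nat) M := flatten (map (Bw w) (iota 1 M)).

Lemma Lw_perm w M : positive_word w -> (forall x, x \in w -> x <= M) ->
  perm_eq (Lw w M) (map succn (iota 0 (size w))).
Proof.
move=> PW HM; apply/permP => P; rewrite /Lw count_flat count_map.
apply: eq_in_count => q; rewrite mem_iota add0n => hq /=.
have wq : nth 0 w q \in w by rewrite mem_nth.
have := HM _ wq; move/allP: PW => /(_ _ wq) h0 h1.
by rewrite h0 /= add1n ltnS h1 andbT.
Qed.

Lemma take_map_iota (w : seq nat) p : p <= size w -> map (nth 0 w) (iota 0 p) = take p w.
Proof. by move=> hp; rewrite -{2}(w_map w) -map_take take_iota (minn_idPl hp). Qed.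

Lemma index_Lw w M p : positive_word w -> (forall x, x \in w -> x <= M) -> p < size w ->
  index p.+1 (Lw w M) = count (fun x => x < nth 0 w p) w + count_mem (nth 0 w p) (take p w).
Proof.
move=> PW HM hp.
have wq : nth 0 w p \in w by rewrite mem_nth.
have a0 : 0 < nth 0 w p by move/allP: PW => /(_ _ wq).
have aM := HM _ wq.
set a := nth 0 w p.
have Ei : iota 1 M = iota 1 a.-1 ++ a :: iota a.+1 (M - a).
  have -> : M = a.-1 + (M - a).+1 by lia.
  by rewrite iotaD /= add1n (ltn_predK a0); congr (_ ++ _ :: iota _ _); lia.
rewrite /Lw Ei map_cat flatten_cat index_cat.
have -> : (p.+1 \in flatten (map (Bw w) (iota 1 a.-1))) = false.
  apply/negP => /flattenP [s /mapP [b]]; rewrite mem_iota => hb -> /mem_Bw [q [[<-] _ wp]].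
  by move: hb; rewrite -wp; lia.
rewrite /= index_cat.
have pin : p.+1 \in Bw w a.
  by rewrite /Bw; apply: map_f; rewrite mem_filter mem_iota eqxx /= hp.
rewrite pin; congr (_ + _).
  rewrite -count_predT count_flat -[in RHS](w_map w) count_map; apply: eq_in_count => q.
  rewrite mem_iota => /andP [_ hq] /=.
  have wq' : nth 0 w q \in w by rewrite mem_nth //; lia.
  move/allP: PW => /(_ _ wq') ->; rewrite /= add1n (ltn_predK a0) //.
rewrite /Bw index_map; last exact: succn_inj.
have -> : iota 0 (size w) = iota 0 p ++ p :: iota p.+1 (size w - p.+1).
  have {1}-> : size w = p + (size w - p.+1).+1 by lia.
  by rewrite iotaD.
rewrite filter_cat index_cat.
have -> : (p \in [seq x <- iota 0 p | nth 0 w x == a]) = false.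
  by rewrite mem_filter mem_iota ltnn andbF andbC.
rewrite /= eqxx /= eqxx addn0 size_filter -(take_map_iota (ltnW hp)) count_map.
by [].
Qed.

Lemma std_eq w M : positive_word w -> (forall x, x \in w -> x <= M) ->
  std w = [seq (index p.+1 (Lw w M)).+1 | p <- iota 0 (size w)].
Proof.
move=> PW HM; rewrite /std; apply/eq_in_map => p; rewrite mem_iota add0n => hp.
by rewrite index_Lw.
Qed.

Lemma perm_inv_eq w M : positive_word w -> (forall x, x \in w -> x <= M) ->
  perm_inv (std w) = Lw w M.
Proof.
move=> PW HM.
have Hp := Lw_perm PW HM.
have uL : uniq (Lw w M).
  by rewrite (perm_uniq Hp) map_inj_uniq ?iota_uniq //; exact: succn_inj.
have sL : size (Lw w M) = size w by rewrite (perm_size Hp) size_map size_iota.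
have memL : forall x, (x \in Lw w M) = (0 < x <= size w).
  move=> x; rewrite (perm_mem Hp); apply/mapP/idP => [[q]|]; first by rewrite mem_iota => hq ->; lia.
  by move=> hx; exists x.-1; rewrite ?mem_iota; lia.
have Es := std_eq PW HM.
have ss : size (std w) = size w by rewrite Es size_map size_iota.
have us : uniq (std w).
  rewrite Es map_inj_in_uniq ?iota_uniq // => p q; rewrite !mem_iota => hp hq [] e.
  have : nth 0 (Lw w M) (index p.+1 (Lw w M)) = nth 0 (Lw w M) (index q.+1 (Lw w M)) by rewrite e.
  rewrite !nth_index ?memL; [case|lia|lia] => //.
apply: (@eq_from_nth _ 0); first by rewrite size_map size_iota ss sL.
move=> j; rewrite size_map size_iota ss => hj.
rewrite (nth_map 0) ?size_iota ?ss // nth_iota // add1n.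
set u := nth 0 (Lw w M) j.
have uin : u \in Lw w M by rewrite mem_nth // sL.
have [hu0 hun] : 0 < u /\ u <= size w by move: uin; rewrite memL; lia.
have Esp : nth 0 (std w) u.-1 = j.+1.
  rewrite Es (nth_map 0) ?size_iota; last by lia.
  by rewrite nth_iota; [rewrite add0n (ltn_predK hu0) index_uniq // sL | lia].
rewrite -Esp index_uniq //; [lia | rewrite ss; lia].
Qed.
End Main.

Theorem corollary8p3 (w : seq nat) :
  positive_word w -> reverse_lattice w ->
  T_of w = P_of (perm_inv (std w)).
Proof.
move=> PW RL.
have HM : forall x, x \in w -> x <= foldr maxn 0 w.
  elim: (w) => //= y s IH x; rewrite inE => /orP [/eqP ->|/IH]; first exact: leq_maxl.
  by move=> h; apply: leq_trans h (leq_maxr _ _).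
rewrite (T_final PW RL HM) (perm_inv_eq PW HM) /P_of /Lw.
rewrite -(P_step RL); congr foldl; congr flatten; apply: eq_map => b.
by rewrite rev_colT.
Qed.
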